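(* Let $V$ be a finite connected graph and let $E_1,E_2,E_3\subseteq V$ be connected subgraphs such that every edge of $V$ lies in exactly two of $E_1,E_2,E_3$, and such that $E_1\cap E_2\cap E_3$ is a single vertex $w$. Then, after renumbering, $V$ has one of the following forms: (a) $E_1,E_2,E_3$ are all the single point $w$; (b) $E_1=\{w\}$ and $E_2=E_3=V$, and $V$ has at least one edge; (c) $V=E_1\cup E_2$ with $E_1\cap E_2=\{w\}$ (so $V=E_1\vee_wE_2$) and $E_3=V$, and each of $E_1,E_2,E_3$ has at least one edge; (d) $V=V_1\cup V_2\cup V_3$ for subgraphs $V_1,V_2,V_3$ any two of which meet exactly in $\{w\}$ (so $V=\bigvee_w V_i$), and $E_i=V_{i+1}\vee_w V_{i+2}$ (indices mod $3$), with each $E_i$ having at least one edge. *)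

(* Defs.v *)
(* Finite (multi)graphs: vertex finType, edge finType,
   each edge with two endpoints (loops / parallel edges allowed). *)
From mathcomp Require Import all_boot.
Set Implicit Arguments. Unset Strict Implicit. Unset Printing Implicit Defensive.

Record graph := Graph {
  gV : finType;
  gE : finType;
  src : gE -> gV;
  tgt : gE -> gV }.

(* A (candidate) subgraph: a vertex set and an edge set. *)
Record sg (G : graph) := SG { sv : {set gV G}; se : {set gE G} }.
Arguments SG {G}.

Definition is_sub (G : graph) (H : sg G) : Prop :=
  forall f, f \in se H -> src f \in sv H /\ tgt f \in sv H.

Definition full (G : graph) : sg G := SG setT setT.
Definition pt (G : graph) (w : gV G) : sg G := SG [set w] set0.
Definition sg_cup (G : graph) (H K : sg G) : sg G :=
  SG (sv H :|: sv K) (se H :|: se K).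
Definition sg_cap (G : graph) (H K : sg G) : sg G :=
  SG (sv H :&: sv K) (se H :&: se K).

Definition adj (G : graph) (B : {set gE G}) : rel (gV G) :=
  fun x y => [exists f in B, ((src f == x) && (tgt f == y))
                            || ((src f == y) && (tgt f == x))].

Definition connected (G : graph) (H : sg G) : Prop :=
  sv H != set0 /\
  forall x y, x \in sv H -> y \in sv H -> connect (adj (se H)) x y.

Definition i0 : 'I_3 := @Ordinal 3 0 isT.
Definition i1 : 'I_3 := @Ordinal 3 1 isT.
Definition i2 : 'I_3 := @Ordinal 3 2 isT.

(* Main.v *)
Require Import Defs.
From mathcomp Require Import all_boot all_fingroup.

Lemma ordS0 : ordS i0 = i1. Proof. by apply: val_inj. Qed.
Lemma ordS1 : ordS i1 = i2. Proof. by apply: val_inj. Qed.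
Lemma ordS2 : ordS i2 = i0. Proof. by apply: val_inj. Qed.
Lemma ord3 (P : 'I_3 -> Prop) : P i0 -> P i1 -> P i2 -> forall i, P i.
Proof.
move=> H0 H1 H2 [[|[|[|n]]] Hi].
- by have -> : Ordinal Hi = i0 by apply: val_inj.
- by have -> : Ordinal Hi = i1 by apply: val_inj.
- by have -> : Ordinal Hi = i2 by apply: val_inj.
- by [].
Qed.
Lemma card3 (P : pred 'I_3) : #|[set i | P i]| = (P i0 + P i1 + P i2)%N.
Proof.
rewrite -sum1_card big_mkcond /= !big_ord_recl big_ord0 !inE addn0 addnA.
have -> : (lift ord0 (lift ord0 (ord0 : 'I_1))) = i2 by apply: val_inj.
have -> : (lift ord0 (ord0 : 'I_2)) = i1 by apply: val_inj.
have -> : (ord0 : 'I_3) = i0 by apply: val_inj.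
by case: (P i0); case: (P i1); case: (P i2).
Qed.
Lemma sg_ext (G : graph) (H K : sg G) : sv H = sv K -> se H = se K -> H = K.
Proof. by case: H; case: K => ? ? ? ? /= -> ->. Qed.

Ltac bashc Es f :=
  case: (f \in se (Es i0)); case: (f \in se (Es i1)); case: (f \in se (Es i2)).
Ltac vb Es w VF F1 INC N0 N1 N2 :=
  let x := fresh "x" in let xw := fresh "xw" in
  apply/setP; intro x; rewrite !inE; case: (eqVneq x w);
  [ move=> ->; move: (VF w); rewrite eqxx;
    case: (w \in sv (Es i0)); case: (w \in sv (Es i1)); case: (w \in sv (Es i2)); done
  | intro xw; let f := fresh "f" in let Hf := fresh "Hf" in
    case: (INC x xw); intros f Hf;
    move: (VF x) (F1 f) (Hf i0) (Hf i1) (Hf i2); rewrite (negbTE xw);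
    move: (N0 f) (N1 f) (N2 f);
    case: (x \in sv (Es i0)); case: (x \in sv (Es i1)); case: (x \in sv (Es i2));
    bashc Es f; done ].
Ltac eb Es F1 N0 N1 N2 :=
  let f := fresh "f" in
  apply/setP; intro f; rewrite !inE; move: (F1 f);
  move: (N0 f) (N1 f) (N2 f); bashc Es f; done.
Ltac se Es w VF F1 INC N0 N1 N2 := apply: sg_ext => /=; do 2 rewrite ?ordS0 ?ordS1 ?ordS2;
  [vb Es w VF F1 INC N0 N1 N2|eb Es F1 N0 N1 N2].
Ltac ne := apply/set0Pn;
  by eexists; eassumption.

Theorem lemma4p4 (G : graph) (Es : 'I_3 -> sg G) (w : gV G) :
  connected (full G) ->
  (forall i, is_sub (Es i)) ->
  (forall i, connected (Es i)) ->
  (forall f : gE G, #|[set i | f \in se (Es i)]| = 2) ->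
  sg_cap (sg_cap (Es i0) (Es i1)) (Es i2) = pt w ->
  exists s : {perm 'I_3},
    let K := fun i => Es (s i) in
    [\/ (forall i, K i = pt w),
        [/\ K i0 = pt w, K i1 = full G, K i2 = full G & (0 < #|gE G|)%N],
        [/\ sg_cup (K i0) (K i1) = full G, sg_cap (K i0) (K i1) = pt w,
            K i2 = full G & forall i, se (K i) != set0]
      | exists Vs : 'I_3 -> sg G,
          [/\ (forall i, is_sub (Vs i)),
              sg_cup (sg_cup (Vs i0) (Vs i1)) (Vs i2) = full G,
              (forall i j, i != j -> sg_cap (Vs i) (Vs j) = pt w),
              (forall i, K i = sg_cup (Vs (ordS i)) (Vs (ordS (ordS i))))
            & forall i, se (K i) != set0]].
Proof.
move=> Hconn CL _ H2 Hcap.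
rewrite /sg_cap /pt /= in Hcap; case: Hcap => Hv _.
have VF : forall x, [&& x \in sv (Es i0), x \in sv (Es i1) & x \in sv (Es i2)] = (x == w).
  by move=> x; move/setP: Hv => /(_ x); rewrite !inE andbA.
have F1 : forall f, ((f \in se (Es i0)) + (f \in se (Es i1)) + (f \in se (Es i2)) = 2)%N.
  by move=> f; rewrite -(H2 f) card3.
have INC : forall x, x != w -> exists f, forall i, (f \in se (Es i)) ==> (x \in sv (Es i)).
  move=> x xw; case: Hconn => _ /(_ x w (in_setT x) (in_setT w)) /connectP [p].
  case: p => [/= _ xe|y p /= /andP[/existsP[f /andP[_ Hf]] _] _].
    by rewrite xe eqxx in xw.
  exists f => i; apply/implyP => /CL [Hs Ht].
  by move: Hf => /orP [/andP[/eqP <- _]|/andP[_ /eqP <-]].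
pose r1 : {perm 'I_3} := perm (@ordS_inj 3).
pose r2 : {perm 'I_3} := perm (inj_comp (@ordS_inj 3) (@ordS_inj 3)).
have N0 : ~~ [exists f, (f \in se (Es i1)) && (f \in se (Es i2))] ->
          forall f, ~~ ((f \in se (Es i1)) && (f \in se (Es i2))).
  by move=> h f; apply: contra h => hf; apply/existsP; exists f.
have N1 : ~~ [exists f, (f \in se (Es i2)) && (f \in se (Es i0))] ->
          forall f, ~~ ((f \in se (Es i2)) && (f \in se (Es i0))).
  by move=> h f; apply: contra h => hf; apply/existsP; exists f.
have N2 : ~~ [exists f, (f \in se (Es i0)) && (f \in se (Es i1))] ->
          forall f, ~~ ((f \in se (Es i0)) && (f \in se (Es i1))).
  by move=> h f; apply: contra h => hf; apply/existsP; exists f.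
case: (boolP [exists f, (f \in se (Es i1)) && (f \in se (Es i2))]) => He0;
  [case/existsP: He0 => fa /andP[ha1 ha2]; have {}N0 : forall f : gE G, true by [] | move/N0: He0 => {}N0];
case: (boolP [exists f, (f \in se (Es i2)) && (f \in se (Es i0))]) => He1;
  try (case/existsP: He1 => fb /andP[hb1 hb2]; have {}N1 : forall f : gE G, true by []); try (move/N1: He1 => {}N1);
case: (boolP [exists f, (f \in se (Es i0)) && (f \in se (Es i1))]) => He2;
  try (case/existsP: He2 => fc /andP[hc1 hc2]; have {}N2 : forall f : gE G, true by []); try (move/N2: He2 => {}N2).
-
  exists 1%g; cbv zeta beta; apply: Or44.
  pose Vs := fun j : 'I_3 => SG
    [set x | (x \in sv (Es (ordS j))) && (x \in sv (Es (ordS (ordS j))))]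
    [set f | (f \in se (Es (ordS j))) && (f \in se (Es (ordS (ordS j))))].
  exists Vs; split.
  + move=> i; rewrite /is_sub /Vs /= => f; rewrite !inE => /andP[/CL[h1 h2] /CL[h3 h4]].
    rewrite ?inE; by split; apply/andP; split.
  + rewrite /Vs; se Es w VF F1 INC N0 N1 N2.
  + apply: ord3; apply: ord3 => // _; rewrite /Vs; se Es w VF F1 INC N0 N1 N2.
  + apply: ord3; rewrite perm1 /Vs; se Es w VF F1 INC N0 N1 N2.
  + apply: ord3; rewrite perm1; ne.
-
  exists 1%g; cbv zeta beta; apply: Or43; rewrite ?perm1; split.
  + se Es w VF F1 INC N0 N1 N2. + se Es w VF F1 INC N0 N1 N2. + se Es w VF F1 INC N0 N1 N2.
  + apply: ord3; rewrite perm1; ne.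
-
  exists r2; cbv zeta beta; apply: Or43; rewrite !permE /=; do 2 rewrite ?ordS0 ?ordS1 ?ordS2; split.
  + se Es w VF F1 INC N0 N1 N2. + se Es w VF F1 INC N0 N1 N2. + se Es w VF F1 INC N0 N1 N2.
  + apply: ord3; rewrite permE /=; do 2 rewrite ?ordS0 ?ordS1 ?ordS2; ne.
-
  exists 1%g; cbv zeta beta; apply: Or42; rewrite ?perm1; split.
  + se Es w VF F1 INC N0 N1 N2. + se Es w VF F1 INC N0 N1 N2. + se Es w VF F1 INC N0 N1 N2.
  + by apply/card_gt0P; exists fa.
-
  exists r1; cbv zeta beta; apply: Or43; rewrite !permE /=; do 2 rewrite ?ordS0 ?ordS1 ?ordS2; split.
  + se Es w VF F1 INC N0 N1 N2. + se Es w VF F1 INC N0 N1 N2. + se Es w VF F1 INC N0 N1 N2.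
  + apply: ord3; rewrite permE /=; do 2 rewrite ?ordS0 ?ordS1 ?ordS2; ne.
-
  exists r1; cbv zeta beta; apply: Or42; rewrite !permE /=; do 2 rewrite ?ordS0 ?ordS1 ?ordS2; split.
  + se Es w VF F1 INC N0 N1 N2. + se Es w VF F1 INC N0 N1 N2. + se Es w VF F1 INC N0 N1 N2.
  + by apply/card_gt0P; exists fb.
-
  exists r2; cbv zeta beta; apply: Or42; rewrite !permE /=; do 2 rewrite ?ordS0 ?ordS1 ?ordS2; split.
  + se Es w VF F1 INC N0 N1 N2. + se Es w VF F1 INC N0 N1 N2. + se Es w VF F1 INC N0 N1 N2.
  + by apply/card_gt0P; exists fc.
-
  exists 1%g; cbv zeta beta; apply: Or41; apply: ord3; rewrite perm1; se Es w VF F1 INC N0 N1 N2.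
Qed.
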